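(* Let $q$ be a prime power, let $p\ge2$ be an integer, let $d\in\{1,\dots,p-1\}$, and fix vectors $x_{d+1},\dots,x_p\in\mathbb{F}_q^d\setminus\{0\}$. For $v_1,\dots,v_d\in\mathbb{F}_q^n$ define $v_i=\sum_{j=1}^dx_i(j)v_j$ for $i=d+1,\dots,p$. Then for every function $f:\mathbb{F}_q^n\to[0,\infty)$, $$\frac{1}{q^{nd}}\sum_{v_1,\dots,v_d\in\mathbb{F}_q^n}f(v_1)f(v_2)\cdots f(v_p)\le\|f\|_1^{d-1}\|f\|_{p-d+1}^{p-d+1}.$$
   Context: For $f:\mathbb{F}_q^n\to\mathbb{R}$ and $r\in(0,\infty)$, $\|f\|_r=\big(q^{-n}\sum_{x\in\mathbb{F}_q^n}|f(x)|^r\big)^{1/r}$. $x_i(j)$ denotes the $j$-th coordinate of $x_i$. *)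

(* Defs.v *)
From mathcomp Require Import all_boot all_order all_algebra all_field.
From mathcomp Require Import reals exp.
Set Implicit Arguments. Unset Strict Implicit. Unset Printing Implicit Defensive.
Import Order.TTheory GRing.Theory Num.Theory.
Local Open Scope ring_scope.

Definition fin_Lnorm (R : realType) (F : finFieldType) (n : nat)
  (f : 'rV[F]_n -> R) (r : R) : R :=
  powR ((#|F|%:R ^- n) * \sum_(x : 'rV[F]_n) powR `|f x| r) r^-1.

(* Main.v *)
Require Import Defs.
From mathcomp Require Import all_boot all_order all_algebra all_field.
From mathcomp Require Import reals exp.
Import Order.TTheory GRing.Theory Num.Theory.
Local Open Scope ring_scope.
From mathcomp Require Import zify.


Lemma agm (R : realType) (m : nat) (hm : (0 < m)%N) (E : 'I_m -> R) :
  (forall i, 0 <= E i) -> \prod_i E i <= (\sum_i E i ^+ m) / m%:R.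
Proof.
move=> E0.
have [H _] := @leif_AGM R _ predT (fun i => E i ^+ m) (fun i _ => exprn_ge0 _ (E0 i)).
move: H; rewrite card_ord prodrXl => H.
rewrite -(@ler_pXn2r _ m hm) ?inE ?prodr_ge0 //.
- by rewrite nnegrE; apply: prodr_ge0.
- rewrite nnegrE; apply: divr_ge0 => //; apply: sumr_ge0 => i _; exact: exprn_ge0.
Qed.

Lemma young (R : realType) (k : nat) (a b : R) : 0 <= a -> 0 <= b ->
  a * b ^+ k <= (a ^+ k.+1 + b ^+ k.+1 *+ k) / k.+1%:R.
Proof.
move=> a0 b0.
have := @agm R k.+1 (ltn0Sn k) (fun i => if i == ord0 then a else b) _.
rewrite big_ord_recl big_ord_recl /=.
rewrite prodr_const sumr_const !card_ord; apply.
by move=> i; case: ifP.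
Qed.

Lemma sum_sep (R : realType) (F : finFieldType) (n d : nat)
  (f G : 'rV[F]_n -> R) (j0 : 'I_d) :
  \sum_(v : {ffun 'I_d -> 'rV[F]_n}) (G (v j0) * \prod_(j | j != j0) f (v j))
  = (\sum_u G u) * (\sum_u f u) ^+ d.-1.
Proof.
have -> : (\sum_u G u) * (\sum_u f u) ^+ d.-1 =
  \prod_j \sum_u (if j == j0 then G u else f u).
  rewrite (bigD1 j0) //= eqxx; congr (_ * _).
  under [RHS]eq_bigr => j /negbTE hj do rewrite hj.
  rewrite (prodr_const (fun i : 'I_d => i != j0)).
  have -> : #|(fun i : 'I_d => i != j0)| = #|predC1 j0| by apply: eq_card.
  by rewrite cardC1 card_ord.
rewrite bigA_distr_bigA /=; apply: eq_bigr => v _.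
rewrite [RHS](bigD1 j0) //= eqxx; congr (_ * _).
by apply: eq_bigr => j /negbTE ->.
Qed.

Lemma sum_chg (R : realType) (F : finFieldType) (n d : nat)
  (f G : 'rV[F]_n -> R) (j0 : 'I_d) (c : 'I_d -> F) (hc : c j0 != 0) :
  \sum_(v : {ffun 'I_d -> 'rV[F]_n})
     (G (\sum_(j < d) c j *: v j) * \prod_(j | j != j0) f (v j))
  = \sum_(v : {ffun 'I_d -> 'rV[F]_n}) (G (v j0) * \prod_(j | j != j0) f (v j)).
Proof.
pose phi (v : {ffun 'I_d -> 'rV[F]_n}) : {ffun 'I_d -> 'rV[F]_n} :=
  [ffun j => if j == j0 then \sum_(i < d) c i *: v i else v j].
have phi_inj : injective phi.
  move=> v w /ffunP E; apply/ffunP => j.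
  case: (eqVneq j j0) => [->|hj]; last by have := E j; rewrite !ffunE (negbTE hj).
  have := E j0; rewrite !ffunE eqxx (bigD1 j0) //= [in X in _ = X -> _](bigD1 j0) //=.
  have -> : \sum_(i < d | i != j0) c i *: v i = \sum_(i < d | i != j0) c i *: w i.
    by apply: eq_bigr => i hi; have := E i; rewrite !ffunE (negbTE hi) => ->.
  by move/addIr/(scalerI hc).
rewrite [RHS](reindex_inj phi_inj) /=; apply: eq_bigr => v _.
rewrite ffunE eqxx; congr (_ * _).
by apply: eq_bigr => j /= /negbTE hj; rewrite ffunE hj.
Qed.

Lemma termB (R : realType) (F : finFieldType) (n d k : nat)
  (f : 'rV[F]_n -> R) (hf : forall v, 0 <= f v)
  (j0 : 'I_d) (c : 'I_d -> F) (hc : c j0 != 0) :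
  \sum_(v : {ffun 'I_d -> 'rV[F]_n})
     ((\prod_(j < d) f (v j)) * f (\sum_(j < d) c j *: v j) ^+ k)
  <= (\sum_u f u) ^+ d.-1 * \sum_u f u ^+ k.+1.
Proof.
pose w (v : {ffun 'I_d -> 'rV[F]_n}) := \sum_(j < d) c j *: v j.
pose Pr (v : {ffun 'I_d -> 'rV[F]_n}) := \prod_(j | j != j0) f (v j).
apply: (@le_trans _ _ (\sum_(v : {ffun 'I_d -> 'rV[F]_n})
   ((f (v j0) ^+ k.+1 + f (w v) ^+ k.+1 *+ k) / k.+1%:R * Pr v))).
  apply: ler_sum => v _; rewrite (bigD1 j0) //= mulrAC.
  apply: ler_wpM2r; first by apply: prodr_ge0 => j _.
  exact: young.
have e1 := @sum_sep _ _ _ _ f (fun u => f u ^+ k.+1) j0.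
have e2 := @sum_chg _ _ _ _ f (fun u => f u ^+ k.+1) j0 c hc.
rewrite e1 in e2.
rewrite (eq_bigr (fun v : {ffun 'I_d -> 'rV[F]_n} => (f (v j0) ^+ k.+1 * Pr v + (f (w v) ^+ k.+1 * Pr v) * k%:R)
    / k.+1%:R)); last by move=> v _; rewrite mulrAC mulrDl mulrnAl mulr_natr.
rewrite -mulr_suml big_split /= -mulr_suml e1 e2.
set X := (\sum_u f u ^+ k.+1) * _.
have -> : X + X * k%:R = X * k.+1%:R by rewrite -natr1 mulrDr mulr1 addrC.
by rewrite -mulrA divff ?mulr1 ?pnatr_eq0 // /X mulrC.
Qed.

Theorem lemmaA2 (R : realType) (F : finFieldType) (n p d : nat)
  (hp : (2 <= p)%N) (hd1 : (1 <= d)%N) (hdp : (d <= p - 1)%N)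
  (x : 'I_(p - d) -> 'rV[F]_d) (hx : forall i, x i != 0)
  (f : 'rV[F]_n -> R) (hf : forall v, 0 <= f v) :
  (#|F|%:R ^- (n * d)) *
    \sum_(v : {ffun 'I_d -> 'rV[F]_n})
       ((\prod_(j < d) f (v j)) *
        \prod_(i < p - d) f (\sum_(j < d) x i 0 j *: v j))
  <= fin_Lnorm f 1 ^+ (d - 1) * fin_Lnorm f (p - d + 1)%:R ^+ (p - d + 1).
Proof.
have k0 : (0 < p - d)%N by lia.
move: x hx; set k := (p - d)%N => x hx.
set q : R := #|F|%:R.
set S1 := \sum_u f u.
set Sk := \sum_u f u ^+ k.+1.
have main : \sum_(v : {ffun 'I_d -> 'rV[F]_n})
       ((\prod_(j < d) f (v j)) *
        \prod_(i < k) f (\sum_(j < d) x i 0 j *: v j)) <= S1 ^+ d.-1 * Sk.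
  apply: (@le_trans _ _ (\sum_(v : {ffun 'I_d -> 'rV[F]_n}) \sum_(i < k)
      ((\prod_(j < d) f (v j)) * f (\sum_(j < d) x i 0 j *: v j) ^+ k) / k%:R)).
    apply: ler_sum => v _.
    rewrite -mulr_suml -mulr_sumr -mulrA; apply: ler_wpM2l.
      by apply: prodr_ge0 => j _.
    exact: (@agm R k k0 (fun i => f (\sum_(j < d) x i 0 j *: v j))).
  rewrite exchange_big /=.
  under eq_bigr do rewrite -mulr_suml.
  rewrite -mulr_suml.
  apply: (@le_trans _ _ ((\sum_(i < k) (S1 ^+ d.-1 * Sk)) / k%:R)).
    apply: ler_wpM2r; first by rewrite invr_ge0 ler0n.
    apply: ler_sum => i _.
    have [j0 hj0] : exists j0, x i 0 j0 != 0.
      case: (pickP (fun j => x i 0 j != 0)) => [j hj|H]; first by exists j.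
      case/eqP: (hx i); apply/rowP => j; rewrite mxE.
      by move: (H j) => /negbFE/eqP.
    exact: (@termB R F n d k f hf j0 (fun j => x i 0 j) hj0).
  by rewrite sumr_const card_ord -(mulr_natr (S1 ^+ d.-1 * Sk) k) mulfK // pnatr_eq0 -lt0n.
have q0 : 0 <= q ^- n.
  rewrite invr_ge0; exact: (exprn_ge0 _ (ler0n R #|F|)).
have L1 : fin_Lnorm f 1 = q ^- n * S1.
  rewrite /fin_Lnorm invr1 powRr1.
    by congr (_ * _); apply: eq_bigr => u _; rewrite powRr1 ?ger0_norm.
  apply: mulr_ge0 => //; apply: sumr_ge0 => u _; exact: powR_ge0.
have Lk : fin_Lnorm f (k + 1)%:R ^+ (k + 1) = q ^- n * Sk.
  rewrite /fin_Lnorm -powR_mulrn ?powR_ge0 // -powRrM mulVf ?pnatr_eq0 ?addn1 //.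
  rewrite powRr1.
    by congr (_ * _); apply: eq_bigr => u _; rewrite powR_mulrn ?ger0_norm.
  apply: mulr_ge0 => //; apply: sumr_ge0 => u _; exact: powR_ge0.
rewrite L1 Lk subn1 exprMn.
have -> : q ^- (n * d) = (q ^- n) ^+ d.-1 * q ^- n.
  by rewrite -exprSr prednK // exprVn -exprM.
rewrite mulrACA; apply: ler_wpM2l => //.
apply: mulr_ge0 => //; exact: exprn_ge0.
Qed.
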